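(* Let $[X,d,m]$ be a metric random walk space with invariant and reversible measure $\nu$ under the standing assumptions below, let $\Omega\subset X$ be a bounded $\nu$-measurable set with $0<\nu(\Omega)<\nu(X)$, let $\psi\in L^\infty(\partial_m\Omega,\nu)$ and $p>1$. If $(m,\nu)$ satisfies a $p$-Poincaré inequality in $\Omega$, then there exists $u_p\in L^p(\Omega,\nu)$ such that $$-\int_{\Omega_m}|(u_p)_\psi(y)-u_p(x)|^{p-2}\big((u_p)_\psi(y)-u_p(x)\big)\,dm_x(y)=0\quad\text{for }\nu\text{-a.e. }x\in\Omega,$$ and moreover $\|u_p\|_{L^\infty(\Omega,\nu)}\le\|\psi\|_{L^\infty(\partial_m\Omega,\nu)}$.
   Context: A metric random walk space $[X,d,m]$ is a Polish metric space $(X,d)$ with a family $m=(m_x)_{x\in X}$ of Borel probability measures such that $x\mapsto m_x(A)$ is Borel measurable for every Borel $A$ and each $m_x$ has finite first moment. $\nu$ is invariant: $\nu(A)=\int_X m_x(A)\,d\nu(x)$ for all $\nu$-measurable $A$; reversible: $dm_x(y)\,d\nu(x)=dm_y(x)\,d\nu(y)$. Standing assumptions: $(X,d,\nu)$ is $\sigma$-finite, $\nu(X)<\infty$, $\nu$ ergodic (every Borel $B$ with $m_x(B)=1$ for all $x\in B$ has $\nu(B)\in\{0,\nu(X)\}$). $\partial_m\Omega:=\{x\in X\setminus\Omega: m_x(\Omega)>0\}$, $\Omega_m:=\Omega\cup\partial_m\Omega$. For $w:\Omega\to\mathbb{R}$, $w_\psi:\Omega_m\to\mathbb{R}$ equals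 $w$ on $\Omega$ and $\psi$ on $\partial_m\Omega$. For $q\ge1$, $(m,\nu)$ satisfies a $q$-Poincaré inequality in $\Omega$ if there is $\lambda>0$ such that $\lambda\int_\Omega|u(x)|^q\,d\nu(x)\le\int_\Omega\int_{\Omega_m}|u_\psi(y)-u(x)|^q\,dm_x(y)\,d\nu(x)+\int_{\partial_m\Omega}|\psi(y)|^q\,d\nu(y)$ for all $u\in L^q(\Omega,\nu)$ and all $\psi\in L^q(\partial_m\Omega,\nu)$. *)

(* Defs.v *)
From HB Require Import structures.
From mathcomp Require Import all_boot all_order all_algebra.
From mathcomp Require Import all_classical all_reals all_analysis.
Set Implicit Arguments. Unset Strict Implicit. Unset Printing Implicit Defensive.
Import Order.TTheory GRing.Theory Num.Theory.
Import numFieldNormedType.Exports.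
Local Open Scope classical_set_scope.
Local Open Scope ring_scope.

Section MRW.
Context {R : realType} {d : measure_display} {X : measurableType d}.

Definition is_metric (dist : X -> X -> R) : Prop :=
  (forall x y, 0 <= dist x y) /\ (forall x y, dist x y = 0 <-> x = y) /\
  (forall x y, dist x y = dist y x) /\
  (forall x y z, dist x z <= dist x y + dist y z).

Definition dopen (dist : X -> X -> R) (A : set X) : Prop :=
  forall x, A x -> exists2 e : R, 0 < e & [set y | dist x y < e] `<=` A.

Definition dcomplete (dist : X -> X -> R) : Prop :=
  forall u : nat -> X,
    (forall e : R, 0 < e -> exists N, forall n k, (N <= n)%N -> (N <= k)%N ->
        dist (u n) (u k) < e) ->
    exists l, forall e : R, 0 < e -> exists N, forall n, (N <= n)%N -> dist (u n) l < e.

Definition dseparable (dist : X -> X -> R) : Prop :=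
  exists D : set X, countable D /\
    forall x (e : R), 0 < e -> exists2 y, D y & dist x y < e.

Definition dborel (dist : X -> X -> R) : Prop :=
  (@measurable d X) = <<s dopen dist >>.

Definition polish_metric (dist : X -> X -> R) : Prop :=
  [/\ is_metric dist, dcomplete dist, dseparable dist & dborel dist].

Local Open Scope ereal_scope.

(* metric random walk space [X,d,m]: m is a probability kernel (so x |-> m_x(A)
   is measurable) whose measures have finite first moment *)
Definition metric_random_walk_space (dist : X -> X -> R) (m : R.-pker X ~> X) : Prop :=
  polish_metric dist /\
  forall x, \int[m x]_y (dist x y)%:E < +oo.

Definition invariant_measure (m : R.-pker X ~> X) (nu : {measure set X -> \bar R}) : Prop :=
  forall A, measurable A -> nu A = \int[nu]_x m x A.

(* dm_x(y) dnu(x) = dm_y(x) dnu(y) as measures on X x X, i.e. on rectangles *)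
Definition reversible_measure (m : R.-pker X ~> X) (nu : {measure set X -> \bar R}) : Prop :=
  forall A B, measurable A -> measurable B ->
    \int[nu]_(x in A) m x B = \int[nu]_(y in B) m y A.

Definition ergodic_measure (m : R.-pker X ~> X) (nu : {measure set X -> \bar R}) : Prop :=
  forall B, measurable B -> (forall x, B x -> m x B = 1) ->
    nu B = 0 \/ nu B = nu setT.

Definition dbounded (dist : X -> X -> R) (A : set X) : Prop :=
  exists x0 (r : R), forall x, A x -> (dist x0 x <= r)%R.

Definition mboundary (m : R.-pker X ~> X) (O : set X) : set X :=
  [set x | ~ O x /\ 0 < m x O].

Definition mclosure (m : R.-pker X ~> X) (O : set X) : set X :=
  O `|` mboundary m O.

Definition wpsi (O : set X) (w psi : X -> R) : X -> R :=
  fun x => if x \in O then w x else psi x.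

(* L^q(D, nu), functions represented as functions on X, only values on D matter *)
Definition Lp_on (nu : {measure set X -> \bar R}) (D : set X) (q : R) (u : X -> R) : Prop :=
  measurable_fun D u /\ \int[nu]_(x in D) ((`|u x| `^ q)%R)%:E < +oo.

Definition Linf_on (nu : {measure set X -> \bar R}) (D : set X) (u : X -> R) : Prop :=
  measurable_fun D u /\ exists c : R, {ae nu, forall x, D x -> (`|u x| <= c)%R}.

Definition Linf_norm (nu : {measure set X -> \bar R}) (D : set X) (u : X -> R) : \bar R :=
  ereal_inf [set y : \bar R | {ae nu, forall x, D x -> (`|u x|)%:E <= y}].

Definition poincare_ineq (m : R.-pker X ~> X) (nu : {measure set X -> \bar R})
    (O : set X) (q : R) : Prop :=
  exists2 lam : R, (0 < lam)%R &
    forall u psi, Lp_on nu O q u -> Lp_on nu (mboundary m O) q psi ->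
      lam%:E * \int[nu]_(x in O) ((`|u x| `^ q)%R)%:E <=
      \int[nu]_(x in O) \int[m x]_(y in mclosure m O)
          ((`|wpsi O u psi y - u x| `^ q)%R)%:E
      + \int[nu]_(y in mboundary m O) ((`|psi y| `^ q)%R)%:E.

End MRW.

(* Main.v *)
Require Import Defs.
From HB Require Import structures.
From mathcomp Require Import all_boot all_order all_algebra.
From mathcomp Require Import all_classical all_reals all_analysis.
From mathcomp Require Import measurable_realfun lra.
Import Order.TTheory GRing.Theory Num.Theory.
Import numFieldNormedType.Exports.
Set Implicit Arguments. Unset Strict Implicit. Unset Printing Implicit Defensive.
Local Open Scope classical_set_scope.
Local Open Scope ring_scope.
Section Phi.
Context {R : realType} (p : R) (hp : 1 < p).
Definition phi (t : R) : R := `|t| `^ (p - 2) * t.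

Let p1 : 0 < p - 1. Proof. by rewrite subr_gt0. Qed.

Lemma norm_phi t : `|phi t| = `|t| `^ (p - 1).
Proof.
rewrite /phi normrM ger0_norm ?powR_ge0// mulrC.
have -> : p - 2 = (p - 1) - 1 by rewrite -addrA -opprD.
by rewrite mulr_powRB1.
Qed.

Lemma phi_ge0E t : 0 <= t -> phi t = t `^ (p - 1).
Proof.
move=> t0; rewrite /phi (ger0_norm t0) mulrC.
have -> : p - 2 = (p - 1) - 1 by rewrite -addrA -opprD.
by rewrite mulr_powRB1.
Qed.

Lemma phi_le0E t : t <= 0 -> phi t = - ((- t) `^ (p - 1)).
Proof.
move=> t0; rewrite /phi (ler0_norm t0).
have -> : p - 2 = (p - 1) - 1 by rewrite -addrA -opprD.
rewrite -(mulr_powRB1 (x := - t)) ?oppr_ge0//.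
by rewrite mulNr opprK mulrC.
Qed.

Lemma phi0 : phi 0 = 0.
Proof. by rewrite /phi mulr0. Qed.

Lemma phi_ge0 t : 0 <= t -> 0 <= phi t.
Proof. by move=> t0; rewrite phi_ge0E// powR_ge0. Qed.

Lemma phi_le0 t : t <= 0 -> phi t <= 0.
Proof. by move=> t0; rewrite phi_le0E// oppr_le0 powR_ge0. Qed.

Lemma phi_nd s t : s <= t -> phi s <= phi t.
Proof.
move=> st.
have [s0|s0] := leP 0 s.
  rewrite !phi_ge0E ?(le_trans s0)//.
  apply: ge0_ler_powR => //; first exact: ltW.
  by rewrite nnegrE (le_trans s0).
have [t0|t0] := leP 0 t.
  by apply: (@le_trans _ _ 0); [apply: phi_le0; exact: ltW|exact: phi_ge0].
rewrite (@phi_le0E s (ltW s0)) (@phi_le0E t (ltW t0)) lerN2.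
apply: ge0_ler_powR; first exact: ltW.
- by rewrite nnegrE oppr_ge0 ltW.
- by rewrite nnegrE oppr_ge0 ltW.
- by rewrite lerN2.
Qed.

Lemma phi_bound t C : `|t| <= C -> `|phi t| <= C `^ (p - 1).
Proof.
move=> tC; rewrite norm_phi; apply: ge0_ler_powR => //; first exact: ltW.
all: rewrite ?nnegrE//.
exact: (le_trans _ tC).
Qed.

Lemma powR_cont (q : R) (a : R) : 0 < a -> {for a, continuous (fun x : R => x `^ q)}.
Proof.
move=> a0; apply/differentiable_continuous/derivable1_diffP.
by apply: derivable_powR; rewrite in_itv/= a0.
Qed.

Lemma phi_cont : continuous phi.
Proof.
move=> t0.
have [t0p|t0n|->] := ltgtP t0 0.
- have e : {near t0, (fun t => - ((- t) `^ (p - 1))) =1 phi}.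
    near=> t; rewrite phi_le0E//; apply: ltW; near: t.
    exact: lt_nbhsl.
  apply: cvg_trans (near_eq_cvg e) _.
  rewrite phi_le0E ?ltW//.
  apply: cvgN.
  apply: (continuous_comp (f := fun t => - t) (g := fun x : R => x `^ (p - 1))).
    exact: cvgN.
  by apply: powR_cont; rewrite oppr_gt0.
- have e : {near t0, (fun t => t `^ (p - 1)) =1 phi}.
    near=> t; rewrite phi_ge0E//; apply: ltW; near: t.
    exact: lt_nbhsr.
  apply: cvg_trans (near_eq_cvg e) _.
  rewrite phi_ge0E ?ltW//.
  exact: powR_cont.
- rewrite /continuous_at phi0; apply/cvgrPdist_lt => e e0.
  have d0 : 0 < e `^ (p - 1)^-1 by rewrite powR_gt0.
  near=> t.
  rewrite sub0r normrN norm_phi.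
  have -> : e = (e `^ (p - 1)^-1) `^ (p - 1).
    by rewrite -powRrM mulVf ?gt_eqF// powRr1// ltW.
  apply: gt0_ltr_powR => //; rewrite ?nnegrE ?ltW//.
Unshelve. all: by end_near.
Qed.

Lemma phi_measurable : measurable_fun setT phi.
Proof. exact: measurable_realfun.continuous_measurable_fun phi_cont. Qed.

End Phi.
Section Core.
Context {R : realType} {d : measure_display} {X : measurableType d}
  (m : R.-pker X ~> X) (p : R) (hp : 1 < p) (D : set X) (mD : measurable D)
  (M : R) (M0 : 0 <= M).

Local Notation phi := (phi p).

Definition H (w : X -> R) (x : X) (t : R) : \bar R :=
  (\int[m x]_(y in D) (phi (w y - t))%:E)%E.

Lemma mxD_fin (x : X) : (m x D < +oo)%E.
Proof.
apply: (@le_lt_trans _ _ (m x setT)); last by rewrite prob_kernel ltry.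
by apply: le_measure; rewrite ?inE.
Qed.

Lemma bint (f : X -> R) (C : R) (x : X) : measurable_fun D f ->
  (forall y, D y -> `|f y| <= C) -> (m x).-integrable D (EFin \o f).
Proof.
move=> mf fC; apply: measurable_bounded_integrable => //; first exact: mxD_fin.
rewrite /bounded_near; near=> C'.
have CC : C <= C' by near: C'; apply: nbhs_pinfty_ge; rewrite num_real.
by move=> y Dy /=; apply: le_trans (fC y Dy) CC.
Unshelve. all: by end_near.
Qed.

Lemma mphi (f : X -> R) (A : set X) : measurable_fun A f -> measurable_fun A (fun y => phi (f y)).
Proof. by move=> mf; apply: measurableT_comp => //; exact: phi_measurable. Qed.

Lemma Hint (w : X -> R) (x : X) (t : R) : measurable_fun setT w -> (forall y, `|w y| <= M) -> `|t| <= M ->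
  (m x).-integrable D (fun y => (phi (w y - t))%:E).
Proof.
move=> mw bw bt.
apply: (@bint (fun y => phi (w y - t)) ((M + M) `^ (p - 1))).
  apply: mphi; apply: measurable_funB => //; exact: measurable_funTS.
move=> y Dy; apply: phi_bound => //.
by apply: le_trans (ler_normB _ _) _; exact: lerD.
Qed.

Lemma H_fin (w : X -> R) (x : X) (t : R) : measurable_fun setT w -> (forall y, `|w y| <= M) -> `|t| <= M ->
  H w x t \is a fin_num.
Proof. by move=> mw bw bt; apply: integrable_fin_num => //; exact: Hint. Qed.

Lemma H_le_t (w : X -> R) (x : X) (s t : R) : measurable_fun setT w -> (forall y, `|w y| <= M) ->
  `|s| <= M -> `|t| <= M -> s <= t -> (H w x t <= H w x s)%E.
Proof.
move=> mw bw bs bt st; apply: le_integral => //; try exact: Hint.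
move=> y _; rewrite lee_fin; apply: phi_nd => //.
by rewrite lerD2l lerN2.
Qed.

Lemma H_le_w (w w' : X -> R) (x : X) (t : R) : measurable_fun setT w -> (forall y, `|w y| <= M) ->
  measurable_fun setT w' -> (forall y, `|w' y| <= M) -> `|t| <= M ->
  (forall y, D y -> w y <= w' y) -> (H w x t <= H w' x t)%E.
Proof.
move=> mw bw mw' bw' bt ww'; apply: le_integral => //; try exact: Hint.
move=> y; rewrite inE => Dy; rewrite lee_fin; apply: phi_nd => //.
by rewrite lerD2r ww'.
Qed.

Lemma H_lowM (w : X -> R) (x : X) : (forall y, `|w y| <= M) -> (0 <= H w x (- M))%E.
Proof.
move=> bw; apply: integral_ge0 => y _; rewrite lee_fin; apply: phi_ge0 => //.
have := bw y; rewrite ler_norml => /andP[h _]; lra.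
Qed.

Lemma H_upM (w : X -> R) (x : X) : measurable_fun setT w -> (forall y, `|w y| <= M) -> (H w x M <= 0)%E.
Proof.
move=> mw bw; rewrite -(integral0 (m x) D); apply: le_integral => //.
- by apply: Hint => //; rewrite ger0_norm.
- exact: integrable0.
move=> y _; rewrite lee_fin; apply: phi_le0 => //.
have := bw y; rewrite ler_norml => /andP[_ h]; lra.
Qed.

Lemma H_cvg (f_ : nat -> X -> R) (f : X -> R) (x : X) (C : R) :
  (forall n, measurable_fun D (f_ n)) -> (forall n y, D y -> `|f_ n y| <= C) ->
  (forall y, D y -> f_ ^~ y @ \oo --> f y) ->
  (\int[m x]_(y in D) (phi (f_ n y))%:E)%E @[n --> \oo] -->
  (\int[m x]_(y in D) (phi (f y))%:E)%E.
Proof.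
move=> mf bf cf.
apply: (@dominated_cvg _ _ _ (m x) D mD _ _ (fun=> (C `^ (p - 1))%:E)).
- by move=> n; apply/measurable_EFinP; apply: mphi.
- move=> y Dy; apply: cvg_EFin; first by near=> n.
  rewrite /comp /=.
  exact: (@continuous_cvg _ _ _ _ _ (fun n => f_ n y) phi (f y) (@phi_cont _ _ hp (f y)) (cf y Dy)).
- by [].
- apply: (@bint (fun=> C `^ (p - 1)) (C `^ (p - 1))) => // y _.
  by rewrite ger0_norm ?powR_ge0.
- by move=> n y Dy /=; rewrite lee_fin; apply: phi_bound => //; exact: bf.
Unshelve. all: by end_near.
Qed.


Definition bstep (w : X -> R) (x : X) (ab : R * R) : R * R :=
  let c := (ab.1 + ab.2) / 2 in
  if (0 <= H w x c)%E then (c, ab.2) else (ab.1, c).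

Definition bis (w : X -> R) (x : X) (k : nat) : R * R :=
  iter k (bstep w x) (- M, M).

Lemma bis_inv (w : X -> R) (x : X) (k : nat) :
  (forall y, `|w y| <= M) ->
  [/\ - M <= (bis w x k).1, (bis w x k).1 <= (bis w x k).2, (bis w x k).2 <= M,
      (bis w x k).2 - (bis w x k).1 = (M + M) * (2^-1) ^+ k &
      (0 <= H w x (bis w x k).1)%E /\
      ((bis w x k).2 = M \/ (H w x (bis w x k).2 < 0)%E)].
Proof.
move=> bw; elim: k => [|k [h1 h2 h3 h4 [h5 h6]]].
  have hM : - M <= M by move: M0; lra.
  rewrite /bis /=; split => //.
    by rewrite expr0 mulr1 opprK.
  by split; [exact: H_lowM|left].
rewrite /bis iterS -/(bis w x k) /bstep.
set a := (bis w x k).1; set b := (bis w x k).2.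
rewrite -/a -/b in h1 h2 h3 h4 h5 h6.
have e : (M + M) * 2^-1 ^+ k.+1 = ((M + M) * 2^-1 ^+ k) / 2.
  by rewrite exprS mulrCA mulrC.
case: ifP => hc /=.
  split; [lra|lra|exact: h3|by rewrite e -h4; lra|].
  by split; [exact: hc|exact: h6].
split; [exact: h1|lra|lra|by rewrite e -h4; lra|].
by split; [exact: h5|right; rewrite ltNge hc].
Qed.

Lemma bis_step (w : X -> R) (x : X) (k : nat) :
  (forall y, `|w y| <= M) ->
  (bis w x k).1 <= (bis w x k.+1).1 /\ (bis w x k.+1).2 <= (bis w x k).2.
Proof.
move=> bw; have [_ h2 _ _ _] := bis_inv x k bw.
rewrite /bis iterS -/(bis w x k) /bstep.
case: ifP => _ /=; split => //; lra.
Qed.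

Definition Tb (w : X -> R) (x : X) : R := limn (fun k => (bis w x k).1).

Lemma bis_cvg (w : X -> R) (x : X) : (forall y, `|w y| <= M) ->
  [/\ cvgn (fun k => (bis w x k).1),
      forall k, (bis w x k).1 <= Tb w x & forall k, Tb w x <= (bis w x k).2].
Proof.
move=> bw.
have nd : {homo (fun k => (bis w x k).1) : n m / (n <= m)%N >-> n <= m}.
  by apply/nondecreasing_seqP => k; have [] := bis_step x k bw.
have ni : {homo (fun k => (bis w x k).2) : n m / (n <= m)%N >-> m <= n}.
  by apply/nonincreasing_seqP => k; have [] := bis_step x k bw.
have cv : cvgn (fun k => (bis w x k).1).
  apply: nondecreasing_is_cvgn => //; exists M => _ [k _ <-].
  by have [_ h2 h3 _ _] := bis_inv x k bw; lra.
split => //; first exact: nondecreasing_cvgn_le.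
move=> k; apply: limr_le => //; near=> n.
have [_ h2 _ _ _] := bis_inv x n bw.
apply: le_trans h2 _; apply: ni; near: n.
exact: nbhs_infty_ge.
Unshelve. all: by end_near.
Qed.

Lemma Tb_props (w : X -> R) (x : X) : measurable_fun setT w -> (forall y, `|w y| <= M) ->
  [/\ - M <= Tb w x, Tb w x <= M, (0 <= H w x (Tb w x))%E &
      forall s, Tb w x < s -> s <= M -> (H w x s < 0)%E].
Proof.
move=> mw bw; have [cv la lb] := bis_cvg x bw.
have TM : Tb w x <= M by have [_ _ h3 _ _] := bis_inv x 0 bw; apply: le_trans (lb 0%N) h3.
have MT : - M <= Tb w x by have [h1 _ _ _ _] := bis_inv x 0 bw; apply: le_trans h1 (la 0%N).
split => //.
- have hc := @H_cvg (fun k y => w y - (bis w x k).1) (fun y => w y - Tb w x) x (M + M).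
  have := hc _ _ _; rewrite -/(H w x (Tb w x)) => /(_ _ _ _)/cvg_lim <-.
  + apply: lime_ge.
      apply/cvg_ex; eexists; apply: hc.
      * by move=> n; apply: measurable_funB => //; exact: measurable_funTS.
      * move=> n y _; have [h1 h2 h3 _ _] := bis_inv x n bw.
        apply: le_trans (ler_normB _ _) _; apply: lerD => //.
        by rewrite ler_norml; apply/andP; split; lra.
      * by move=> y _; apply: cvgB => //; exact: cvg_cst.
    by near=> n; have [_ _ _ _ [h5 _]] := bis_inv x n bw.
  + by [].
  + by move=> n; apply: measurable_funB => //; exact: measurable_funTS.
  + move=> n y _; have [h1 h2 h3 _ _] := bis_inv x n bw.
    apply: le_trans (ler_normB _ _) _; apply: lerD => //.
    by rewrite ler_norml; apply/andP; split; lra.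
  + by move=> y _; apply: cvgB => //; exact: cvg_cst.
- move=> s Ts sM.
  have e0 : 0 < s - Tb w x by rewrite subr_gt0.
  have g1 : `|2^-1| < 1 :> R by rewrite ger0_norm //; lra.
  have := cvg_geometric (M + M) g1.
  move=> /cvgrPdist_lt /(_ _ e0) [N _ /(_ N (leqnn N))] /=.
  rewrite sub0r normrN /geometric.
  have [h1 h2 h3 h4 [h5 h6]] := bis_inv x N bw.
  rewrite -h4 => hN.
  have bs : (bis w x N).2 < s.
    have := la N; have := lb N.
    move: hN; rewrite ger0_norm; last by rewrite subr_ge0.
    lra.
  case: h6 => [bM|hb].
    by move: bs; rewrite bM => /(lt_le_trans)/(_ sM); rewrite ltxx.
  apply: le_lt_trans hb.
  apply: H_le_t => //; last exact: ltW.
    by rewrite ler_norml; apply/andP; split; lra.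
  rewrite ler_norml; apply/andP; split => //.
  have := lb N; lra.
Unshelve. all: by end_near.
Qed.

Lemma Tb_mono (w w' : X -> R) (x : X) :
  measurable_fun setT w -> (forall y, `|w y| <= M) ->
  measurable_fun setT w' -> (forall y, `|w' y| <= M) ->
  (forall y, D y -> w y <= w' y) -> Tb w x <= Tb w' x.
Proof.
move=> mw bw mw' bw' ww'.
rewrite leNgt; apply/negP => lt.
have [h1 h2 h3 _] := Tb_props x mw bw.
have [_ _ _ h4] := Tb_props x mw' bw'.
have := h4 _ lt h2.
have : (H w x (Tb w x) <= H w' x (Tb w x))%E.
  by apply: H_le_w => //; rewrite ler_norml; apply/andP; split.
move=> le1 lt2.
have := le_lt_trans (le_trans h3 le1) lt2.
by rewrite ltxx.
Qed.


Lemma H_meas (w c : X -> R) : measurable_fun setT w -> measurable_fun setT c ->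
  measurable_fun setT (fun x => H w x (c x)).
Proof.
move=> mw mc.
pose k := fun z : X * X => ((phi (w z.2 - c z.1)) * \1_D z.2)%:E.
have mk : measurable_fun setT k.
  apply/measurable_EFinP; apply: measurable_funM.
  - apply: measurableT_comp; first exact: phi_measurable.
    apply: measurable_funB.
    + exact: measurableT_comp mw measurable_snd.
    + exact: measurableT_comp mc measurable_fst.
  - exact: measurableT_comp (measurable_indic mD) measurable_snd.
have eH : (fun x => H w x (c x)) = (fun x => \int[m x]_y k (x, y))%E.
  apply/funext => x; rewrite /H integral_mkcond; apply: eq_integral => y _.
  rewrite /k /= /restrict /patch indicE; case: (y \in D) => /=.
    by rewrite mulr1.
  by rewrite mulr0.
rewrite eH.
have -> : (fun x => \int[m x]_y k (x, y))%E =
    (fun x => \int[m x]_y k^\+ (x, y) - \int[m x]_y k^\- (x, y))%E.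
  apply/funext => x; rewrite [LHS]integralE.
  by congr (_ - _)%E; apply: eq_integral => y _; rewrite ?funeposE ?funenegE.
apply: emeasurable_funB.
- apply: (measurable_fun_integral_finite_kernel (k^\+)%E m).
    by move=> z; rewrite funeposE le_max lexx orbT.
  exact: measurable_funepos.
- apply: (measurable_fun_integral_finite_kernel (k^\-)%E m).
    by move=> z; rewrite funenegE le_max lexx orbT.
  exact: measurable_funeneg.
Qed.

Lemma bis_meas (w : X -> R) (k : nat) : measurable_fun setT w ->
  measurable_fun setT (fun x => (bis w x k).1) /\
  measurable_fun setT (fun x => (bis w x k).2).
Proof.
move=> mw; elim: k => [|k [ma mb]].
  by split; exact: measurable_cst.
pose c := fun x => ((bis w x k).1 + (bis w x k).2) / 2.
have mc : measurable_fun setT c.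
  by apply: measurable_funM; [exact: measurable_funD|exact: measurable_cst].
have mB : measurable_fun setT (fun x => (0 <= H w x (c x))%E).
  by apply: measurable_fun_lee; [exact: measurable_cst|exact: H_meas].
split.
- have -> : (fun x => (bis w x k.+1).1) =
      (fun x => if (0 <= H w x (c x))%E then c x else (bis w x k).1).
    by apply/funext => x; rewrite /bis iterS -/(bis w x k) /bstep; case: ifP.
  exact: measurable_fun_ifT.
- have -> : (fun x => (bis w x k.+1).2) =
      (fun x => if (0 <= H w x (c x))%E then (bis w x k).2 else c x).
    by apply/funext => x; rewrite /bis iterS -/(bis w x k) /bstep; case: ifP.
  exact: measurable_fun_ifT.
Qed.

Lemma Tb_meas (w : X -> R) : measurable_fun setT w -> (forall y, `|w y| <= M) ->
  measurable_fun setT (Tb w).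
Proof.
move=> mw bw.
apply: (measurable_fun_cvg (h := fun k x => (bis w x k).1)).
  by move=> k; have [] := bis_meas k mw.
move=> x _; have [cv _ _] := bis_cvg x bw.
exact: cv.
Qed.


Section Iter.
Variables (O : set X) (mO : measurable O) (psi : X -> R)
  (mpsi : measurable_fun setT psi) (bpsi : forall y, `|psi y| <= M).

Local Notation W u := (wpsi O u psi).

Lemma W_meas (u : X -> R) : measurable_fun setT u -> measurable_fun setT (W u).
Proof.
move=> mu; rewrite /wpsi; apply: measurable_fun_ifT => //.
apply: (measurable_fun_bool true); rewrite setTI.
have -> : (fun x => x \in O) @^-1` [set true] = O.
  by apply/seteqP; split => x /=; [move/set_mem|move/mem_set].
exact: mO.
Qed.

Lemma W_bound (u : X -> R) : (forall y, `|u y| <= M) -> forall y, `|W u y| <= M.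
Proof. by move=> bu y; rewrite /wpsi; case: ifP. Qed.

Lemma W_le (u v : X -> R) : (forall y, u y <= v y) -> forall y, W u y <= W v y.
Proof. by move=> uv y; rewrite /wpsi; case: ifP. Qed.

Definition useq (n : nat) : X -> R := iter n (fun u => Tb (W u)) (fun=> - M).

Lemma useq_props n : measurable_fun setT (useq n) /\ forall x, `|useq n x| <= M.
Proof.
elim: n => [|n [mu bu]].
  split; first exact: measurable_cst.
  by move=> x; rewrite /useq /= normrN ger0_norm.
have mW := W_meas mu; have bW := W_bound bu.
rewrite /useq iterS -/(useq n); split; first exact: Tb_meas.
move=> x; have [h1 h2 _ _] := Tb_props x mW bW.
by rewrite ler_norml h1 h2.
Qed.

Lemma useq_mono n x : useq n x <= useq n.+1 x.
Proof.
elim: n x => [|n IH] x.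
  have [mu bu] := useq_props 0.
  by rewrite /useq iterS /=; have [] := Tb_props x (W_meas mu) (W_bound bu).
have [mu bu] := useq_props n; have [mu' bu'] := useq_props n.+1.
rewrite /useq iterS [in X in _ <= X]iterS -/(useq n) -/(useq n.+1).
apply: Tb_mono; try exact: W_meas; try exact: W_bound.
by move=> y _; apply: W_le.
Qed.

Lemma useq_nd x : {homo (fun n => useq n x) : n m / (n <= m)%N >-> n <= m}.
Proof. by apply/nondecreasing_seqP => n; exact: useq_mono. Qed.

Definition ulim (x : X) : R := limn (fun n => useq n x).

Lemma ulim_cvg x : cvgn (fun n => useq n x).
Proof.
apply: nondecreasing_is_cvgn; first exact: useq_nd.
exists M => _ [n _ <-]; have [_ bu] := useq_props n.
by have := bu x; rewrite ler_norml => /andP[].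
Qed.

Lemma useq_le_ulim n x : useq n x <= ulim x.
Proof. by have := nondecreasing_cvgn_le (@useq_nd x) (@ulim_cvg x) n. Qed.

Lemma ulim_bound x : `|ulim x| <= M.
Proof.
rewrite ler_norml; apply/andP; split.
  apply: le_trans (useq_le_ulim 0 x); have [_ bu] := useq_props 0.
  by have := bu x; rewrite ler_norml => /andP[].
apply: limr_le; first exact: ulim_cvg.
near=> n; have [_ bu] := useq_props n.
by have := bu x; rewrite ler_norml => /andP[].
Unshelve. all: by end_near.
Qed.

Lemma ulim_meas : measurable_fun setT ulim.
Proof.
apply: (measurable_fun_cvg (h := useq)).
  by move=> n; have [] := useq_props n.
by move=> x _; exact: ulim_cvg.
Qed.

Lemma W_cvg y : (fun n => W (useq n) y) @ \oo --> W ulim y.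
Proof.
rewrite /wpsi; case: ifP => _; first exact: ulim_cvg.
exact: cvg_cst.
Qed.

Lemma core_eq x : H (W ulim) x (ulim x) = 0%E.
Proof.
have mU := W_meas ulim_meas; have bU := W_bound ulim_bound.
have bUx := ulim_bound x.
have bnd2 (a b : R) : `|a| <= M -> `|b| <= M -> `|a - b| <= M + M.
  by move=> ha hb; apply: le_trans (ler_normB _ _) _; exact: lerD.
apply/eqP; rewrite eq_le; apply/andP; split; last first.
  have hc := @H_cvg (fun n y => W (useq n) y - useq n x)
    (fun y => W ulim y - ulim x) x (M + M).
  have := hc _ _ _; rewrite -/(H (W ulim) x (ulim x)) => /(_ _ _ _)/cvg_lim <-.
  - apply: lime_ge.
      apply/cvg_ex; eexists; apply: hc.
      + move=> n; have [mu _] := useq_props n.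
        by apply: measurable_funB => //; apply: measurable_funTS; exact: W_meas.
      + move=> n y _; have [_ bu] := useq_props n.
        by apply: bnd2; [exact: W_bound|exact: bu].
      + by move=> y _; apply: cvgB; [exact: W_cvg|exact: ulim_cvg].
    near=> n.
    have [mu bu] := useq_props n.
    have [_ _ h3 _] := Tb_props x (W_meas mu) (W_bound bu).
    apply: (le_trans h3).
    apply: H_le_t; first exact: W_meas mu.
    + exact: W_bound.
    + exact: bu.
    + by have [_ bu'] := useq_props n.+1; exact: bu'.
    + exact: (useq_mono n x).
  - by [].
  - move=> n; have [mu _] := useq_props n.
    by apply: measurable_funB => //; apply: measurable_funTS; exact: W_meas.
  - move=> n y _; have [_ bu] := useq_props n.
    by apply: bnd2; [exact: W_bound|exact: bu].
  - by move=> y _; apply: cvgB; [exact: W_cvg|exact: ulim_cvg].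
have A : forall s, ulim x < s -> s <= M -> (H (W ulim) x s <= 0)%E.
  move=> s us sM.
  have bs : `|s| <= M.
    rewrite ler_norml sM andbT; move: bUx; rewrite ler_norml => /andP[h _].
    by apply: le_trans h (ltW us).
  have hc := @H_cvg (fun n y => W (useq n) y - s) (fun y => W ulim y - s) x (M + M).
  have := hc _ _ _; rewrite -/(H (W ulim) x s) => /(_ _ _ _)/cvg_lim <-.
  - apply: lime_le.
      apply/cvg_ex; eexists; apply: hc.
      + move=> n; have [mu _] := useq_props n.
        by apply: measurable_funB => //; apply: measurable_funTS; exact: W_meas.
      + move=> n y _; have [_ bu] := useq_props n.
        by apply: bnd2 => //; exact: W_bound.
      + by move=> y _; apply: cvgB; [exact: W_cvg|exact: cvg_cst].
    near=> n.
    have [mu bu] := useq_props n.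
    have [_ _ _ h4] := Tb_props x (W_meas mu) (W_bound bu).
    apply: ltW; apply: h4 => //.
    exact: le_lt_trans (useq_le_ulim n.+1 x) us.
  - by [].
  - move=> n; have [mu _] := useq_props n.
    by apply: measurable_funB => //; apply: measurable_funTS; exact: W_meas.
  - move=> n y _; have [_ bu] := useq_props n.
    by apply: bnd2 => //; exact: W_bound.
  - by move=> y _; apply: cvgB; [exact: W_cvg|exact: cvg_cst].
have [uM|Mu] := ltP (ulim x) M; last first.
  have -> : ulim x = M.
    by apply/eqP; rewrite eq_le Mu andbT; move: bUx; rewrite ler_norml => /andP[].
  exact: H_upM.
pose a := (M - ulim x) / 2.
have a0 : 0 < a by rewrite /a divr_gt0 // subr_gt0.
pose s n := ulim x + geometric a (2^-1) n.
have g1 : `|2^-1| < 1 :> R by rewrite ger0_norm //; lra.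
have gpos n : 0 < geometric a (2^-1) n :> R.
  by rewrite /geometric mulr_gt0 // exprn_gt0.
have gle n : geometric a (2^-1) n <= a :> R.
  rewrite /geometric; apply: ler_piMr; first exact: ltW.
  by apply: exprn_ile1; lra.
have sgt n : ulim x < s n by rewrite /s ltrDl.
have sle n : s n <= M.
  have := gle n; rewrite /s /a => h; move: uM; lra.
have bs n : `|s n| <= M.
  rewrite ler_norml sle andbT; move: bUx; rewrite ler_norml => /andP[h _].
  by apply: le_trans h (ltW (sgt n)).
have hc := @H_cvg (fun n y => W ulim y - s n) (fun y => W ulim y - ulim x) x (M + M).
have := hc _ _ _; rewrite -/(H (W ulim) x (ulim x)) => /(_ _ _ _)/cvg_lim <-.
- apply: lime_le.
    apply/cvg_ex; eexists; apply: hc.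
    + by move=> n; apply: measurable_funB => //; exact: measurable_funTS.
    + by move=> n y _; apply: bnd2.
    + move=> y _; apply: cvgB; first exact: cvg_cst.
      rewrite -[X in _ --> X]addr0; apply: cvgD; first exact: cvg_cst.
      exact: cvg_geometric.
  by near=> n; apply: A.
- by [].
- by move=> n; apply: measurable_funB => //; exact: measurable_funTS.
- by move=> n y _; apply: bnd2.
- move=> y _; apply: cvgB; first exact: cvg_cst.
  rewrite -[X in _ --> X]addr0; apply: cvgD; first exact: cvg_cst.
  exact: cvg_geometric.
Unshelve. all: by end_near.
Qed.

Lemma core_exists : exists u : X -> R,
  [/\ measurable_fun setT u, forall x, `|u x| <= M &
      forall x, H (wpsi O u psi) x (u x) = 0%E].
Proof.
exists ulim; split; [exact: ulim_meas|exact: ulim_bound|exact: core_eq].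
Qed.

End Iter.
End Core.

Section Main.
Context {R : realType} {d : measure_display} {X : measurableType d}
  (m : R.-pker X ~> X) (nu : {measure set X -> \bar R}).

Lemma mbnd (O : set X) : measurable O -> measurable (mboundary m O).
Proof.
move=> mO.
have -> : mboundary m O = ~` O `&` ~` (setT `&` [set x | (m x O <= 0)%E]).
  apply/seteqP; split => x /=.
    move=> [nO h]; split => //; move=> [_ /= h2].
    by move: h; rewrite ltNge h2.
  move=> [nO h]; split => //; rewrite ltNge; apply/negP => h2; apply: h.
  by split.
apply: measurableI; first exact: measurableC.
apply: measurableC; apply: measurable_lee => //.
exact: measurable_kernel.
Qed.

Lemma rev_null (O N : set X) : measurable O -> measurable N -> nu N = 0%E ->
  reversible_measure m nu -> (\int[nu]_(x in O) m x N = 0)%E.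
Proof.
move=> mO mN N0 rev; rewrite (rev O N mO mN).
apply: null_set_integral => //.
exact: measurable_funTS (measurable_kernel m O mO).
Qed.

Lemma ae_null (O N : set X) : measurable O -> measurable N ->
  (\int[nu]_(x in O) m x N = 0)%E -> {ae nu, forall x, O x -> m x N = 0%E}.
Proof.
move=> mO mN h.
have mf : measurable_fun O (fun x => m x N).
  exact: measurable_funTS (measurable_kernel m N mN).
have := (ae_eq_integral_abs nu mO mf).1.
apply.
rewrite -h; apply: eq_integral => x _.
by rewrite gee0_abs.
Qed.


Lemma bnd_pos (p : R) (hp : 1 < p) (O : set X) : measurable O ->
  reversible_measure m nu -> (0 < nu O)%E -> (nu O < +oo)%E ->
  poincare_ineq m nu O p -> nu (mboundary m O) <> 0%E.
Proof.
move=> mO rev O0 Ofin [lam lam0 P] B0.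
have mB := mbnd mO.
have p0 : p != 0 by rewrite gt_eqF // (lt_trans _ hp).
have e1 : (\int[nu]_(x in O) ((`|cst 1 x| `^ p)%R)%:E = nu O)%E.
  transitivity (\int[nu]_(x in O) (cst 1%E x))%E.
    by apply: eq_integral => x _; rewrite /= normr1 powR1.
  by rewrite integral_cst // mul1e.
have e0 : (\int[nu]_(x in mboundary m O) ((`|cst (0:R) x| `^ p)%R)%:E = 0)%E.
  transitivity (\int[nu]_(x in mboundary m O) (cst 0%E x))%E.
    by apply: eq_integral => x _; rewrite /= normr0 powR0.
  by rewrite integral0.
have L1 : Lp_on nu O p (cst 1).
  by split; [exact: measurable_cst|rewrite e1].
have L0 : Lp_on nu (mboundary m O) p (cst (0:R)).
  by split; [exact: measurable_cst|rewrite e0].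
have := P (cst 1) (cst (0:R)) L1 L0.
rewrite e1 e0 adde0.
have inner : forall x, (\int[m x]_(y in mclosure m O)
    ((`|wpsi O (cst 1) (cst 0) y - cst 1 x| `^ p)%R)%:E = m x (mboundary m O))%E.
  move=> x.
  have mD : measurable (mclosure m O) by exact: measurableU.
  transitivity (\int[m x]_(y in mclosure m O) (\1_(mboundary m O) y)%:E)%E.
    apply: eq_integral => y; rewrite inE => -[Oy|By].
      have nB : ~ mboundary m O y by case.
      rewrite /wpsi (mem_set Oy) /= subrr normr0 powR0 // indicE.
      by rewrite memNset.
    have nO : ~ O y by case: By.
    rewrite /wpsi /= memNset //.
    by rewrite sub0r normrN normr1 powR1 indicE mem_set.
  rewrite integral_indic //; congr (m x _).
  by apply/seteqP; split => y /=; [case|move=> By; split => //; right].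
under eq_integral do rewrite inner.
rewrite (rev_null mO mB B0 rev) => h.
have : (0 < lam%:E * nu O)%E by apply: mule_gt0 => //; rewrite lte_fin.
by rewrite ltNge h.
Qed.
End Main.

Unset Implicit Arguments.

Theorem mainTheorem5 (R : realType) (d : measure_display) (X : measurableType d)
  (dist : X -> X -> R) (m : R.-pker X ~> X) (nu : {measure set X -> \bar R}) :
  metric_random_walk_space dist m ->
  invariant_measure m nu ->
  reversible_measure m nu ->
  sigma_finite setT nu ->
  (nu setT < +oo)%E ->
  ergodic_measure m nu ->
  forall (O : set X), measurable O -> dbounded dist O ->
  (0 < nu O)%E -> (nu O < nu setT)%E ->
  forall (psi : X -> R), Linf_on nu (mboundary m O) psi ->
  forall (p : R), 1 < p ->
  poincare_ineq m nu O p ->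
  exists u : X -> R,
    [/\ Lp_on nu O p u,
        {ae nu, forall x, O x ->
           (m x).-integrable (mclosure m O)
              (fun y => ((`|wpsi O u psi y - u x| `^ (p - 2)) * (wpsi O u psi y - u x))%:E)
           /\ (- (\int[m x]_(y in mclosure m O)
                ((`|wpsi O u psi y - u x| `^ (p - 2)) * (wpsi O u psi y - u x))%:E) = 0)%E}
      & (Linf_norm nu O u <= Linf_norm nu (mboundary m O) psi)%E].
Proof.
move=> _ _ rev _ finT _ O mO _ O0 OT psi [mpsi [c hc]] p hp Pc.
set B := mboundary m O.
have mB : measurable B := mbnd m mO.
have mDm : measurable (mclosure m O) := measurableU _ _ mO mB.
have Ofin : (nu O < +oo)%E.
  by apply: le_lt_trans finT; apply: le_measure; rewrite ?inE.
have B0 : nu B <> 0%E := bnd_pos hp mO rev O0 Ofin Pc.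
set L := Linf_norm nu B psi.
have Lc : (L <= c%:E)%E.
  apply: ge_ereal_inf; exists c%:E => //.
have L0 : (0 <= L)%E.
  apply/ereal_infP => y Sy; rewrite leNgt; apply/negP => y0.
  case: Sy => N [mN N0 sub]; apply: B0.
  apply/eqP; rewrite eq_le measure_ge0 andbT -N0; apply: le_measure; rewrite ?inE //.
  move=> x Bx; apply: sub => /= h.
  have := h Bx => hy.
  have : (0 <= y)%E by apply: le_trans hy.
  by rewrite leNgt y0.
have Lfin : L \is a fin_num by rewrite ge0_fin_numE // (le_lt_trans Lc) // ltry.
set M := fine L.
have ML : M%:E = L by rewrite fineK.
have M0 : 0 <= M by rewrite -lee_fin ML.
pose Nb := B `&` [set y | M < `|psi y|].
have mNb : measurable Nb.
  have -> : Nb = B `&` psi @^-1` ((@Num.norm _ R) @^-1` `]M, +oo[).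
    by apply/seteqP; split => y /= [By h]; split => //; rewrite /= in_itv /= andbT in h *.
  apply: mpsi => //.
  have := @normr_measurable R setT measurableT _ (@measurable_itv _ `]M, +oo[).
  by rewrite setTI.
have Nb0 : nu Nb = 0%E.
  apply/negligibleP => //.
  pose F k := ~` [set x | B x -> (`|psi x|%:E <= (M + k.+1%:R^-1)%:E)%E].
  apply: (@negligibleS _ _ _ _ (\bigcup_k F k)).
    move=> x [Bx Mx]; have [k hk] := ltr_add_invr Mx.
    exists k => //; rewrite /F /= => /(_ Bx); rewrite lee_fin leNgt hk.
    by [].
  apply: negligible_bigcup => k.
  have : (L < (M + k.+1%:R^-1)%:E)%E by rewrite -ML lte_fin ltrDl invr_gt0.
  move=> /ereal_inf_lt [y Sy yM].
  apply: negligibleS Sy => x /= hx hx'; apply: hx => Bx.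
  exact: le_trans (hx' Bx) (ltW yM).
pose clamp (r : R) := Num.max (- M) (Num.min M r).
pose psi2 := (fun y => clamp (psi y)) \_ B.
have mpsi2 : measurable_fun setT psi2.
  apply/(measurable_restrictT _ mB).
  by apply: measurable_maxr; [exact: measurable_cst|apply: measurable_minr => //; exact: measurable_cst].
have bpsi2 : forall y, `|psi2 y| <= M.
  move=> y; rewrite /psi2 /restrict /patch; case: ifP => _; last by rewrite normr0.
  rewrite ler_norml; apply/andP; split; first by rewrite le_max lexx.
  rewrite ge_max ge_min lexx /= andbT.
  by move: M0; lra.
have psi2E : forall y, B y -> ~ Nb y -> psi2 y = psi y.
  move=> y By nN; rewrite /psi2 /restrict /patch mem_set //.
  have : `|psi y| <= M by rewrite leNgt; apply/negP => h; apply: nN.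
  rewrite ler_norml => /andP[h1 h2].
  by rewrite /clamp min_r // max_r.
have [u [mu bu heq]] := core_exists m hp mDm M0 mO mpsi2 bpsi2.
exists u; split.
- split; first exact: measurable_funTS mu.
  apply: (@le_lt_trans _ _ (\int[nu]_(x in O) (cst (M `^ p)%:E x))%E).
    apply: ge0_le_integral => //.
    + apply/measurable_EFinP; apply: (measurableT_comp (measurable_powR p)).
      apply: (measurableT_comp (@normr_measurable R setT)).
      exact: measurable_funTS mu.
    + by move=> x _ /=; rewrite lee_fin; apply: ge0_ler_powR; rewrite ?nnegrE ?bu //; lra.
  by rewrite integral_cst // lte_mul_pinfty // lee_fin powR_ge0.
- have hae := ae_null mO mNb (rev_null mO mNb Nb0 rev).
  case: hae => N [mN N0 sub]; exists N; split => // x /= hnot; apply: sub => /= hx.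
  apply: hnot => Ox.
  have mxN := hx Ox.
  pose f1 := fun y => ((`|wpsi O u psi y - u x| `^ (p - 2)) * (wpsi O u psi y - u x))%:E.
  pose f2 := fun y => ((`|wpsi O u psi2 y - u x| `^ (p - 2)) * (wpsi O u psi2 y - u x))%:E.
  have mW : measurable_fun (mclosure m O) (wpsi O u psi).
    rewrite /wpsi; apply: measurable_fun_if => //.
    - apply: (measurable_fun_bool true).
      have -> : mclosure m O `&` (fun x => x \in O) @^-1` [set true] = O.
        apply/seteqP; split => y /=; first by case=> _ /set_mem.
        by move=> Oy; split; [left|exact: mem_set].
      exact: mO.
    - exact: measurable_funTS mu.
    - have -> : mclosure m O `&` (fun x => x \in O) @^-1` [set false] = B.
        apply/seteqP; split => y /=.
          case=> -[Oy|By] //; by rewrite mem_set.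
        move=> By; split; first by right.
        by rewrite memNset //; case: By.
      exact: mpsi.
  have mf1 : measurable_fun (mclosure m O) f1.
    apply/measurable_EFinP; apply: (mphi hp).
    by apply: measurable_funB => //; exact: measurable_cst.
  have mf2 : measurable_fun (mclosure m O) f2.
    apply/measurable_EFinP; apply: (mphi hp); apply: measurable_funB => //.
    by apply: measurable_funTS; apply: (W_meas mO mpsi2).
  have ae12 : ae_eq (m x) (mclosure m O) f2 f1.
    exists Nb; split => // y /= h; apply: contrapT => nN; apply: h => Dy.
    have e : wpsi O u psi2 y = wpsi O u psi y.
      rewrite /wpsi; case: ifP => // /negP yO.
      apply: psi2E => //; case: Dy => // Oy.
      by exfalso; apply: yO; exact: mem_set.
    by rewrite /f1 /f2 e.
  have i2 : (m x).-integrable (mclosure m O) f2.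
    exact: (Hint m hp mDm x (W_meas mO mpsi2 mu) (W_bound O bpsi2 bu) (bu x)).
  have ae12a : ae_eq (m x) (mclosure m O) (fun y => `|f2 y|)%E (fun y => `|f1 y|)%E.
    case: ae12 => N' [mN' N0' sub']; exists N'; split => // y /= h; apply: sub' => /= h'.
    by apply: h => Dy; exact: (congr1 abse (h' Dy)).
  split.
  + apply/integrableP; split => //.
    rewrite -(ae_eq_integral _ _ mDm _ _ ae12a).
    * by case/integrableP: i2.
    * by apply: measurableT_comp => //; exact: mf2.
    * by apply: measurableT_comp => //; exact: mf1.
  + rewrite -(ae_eq_integral _ _ mDm mf2 mf1 ae12).
    have := heq x; rewrite /H /phi => ->.
    by rewrite oppe0.
- rewrite -ML; apply: ge_ereal_inf; exists M%:E => //.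
  by apply: aeW => x Ox; rewrite lee_fin; exact: bu.
Qed.
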